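(* Let $X$ be a finite set and let $\mu,\nu:X\to[0,\infty)$ with $\|\mu\|_1\le1$ and $\|\nu\|_1\le1$. Let $\eta,\delta>0$, let $J(x)=(x+|x|)/2$, and let $\epsilon=\delta/\bigl(2\rho(\eta^{-1},\delta/4,J)\bigr)$. Let $\|\cdot\|$ be a norm on $\mathbb{R}^X$ whose dual norm $\|\cdot\|^*$ is an algebra norm, and suppose $\|\mu-\nu\|\le\epsilon$. Then for every $f$ with $0\le f\le\mu$ there exists $g$ with $0\le g\le(1-\delta)^{-1}\nu$ and $\|f-g\|\le\eta$.
   Context: For functions on $X$: $\langle f,g\rangle=\frac1{|X|}\sum_xf(x)g(x)$, $\|f\|_1=\frac1{|X|}\sum_x|f(x)|$; inequalities between functions are pointwise. The dual norm is $\|\phi\|^*=\max\{\langle f,\phi\rangle:\|f\|\le1\}$. An algebra norm is a norm $N$ with $N(fg)\le N(f)N(g)$ (pointwise product) and $N(\mathbf 1)=1$. For a real polynomial $P(x)=\sum_ka_kx^k$, $R_P(x)=\sum_k|a_k|x^k$; for continuous $J$ and $C,\delta>0$, $\rho(C,\delta,J)$ is twice the infimum of $R_P(C)$ over all real polynomials $P$ with $|P(x)-J(x)|\le\delta$ for all $x\in[-C,C]$. *)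

(* Defs.v *)
From HB Require Import structures.
From mathcomp Require Import all_boot all_order all_algebra.
From mathcomp Require Import boolp classical_sets reals.
Set Implicit Arguments. Unset Strict Implicit. Unset Printing Implicit Defensive.
Import Order.TTheory GRing.Theory Num.Theory.
Local Open Scope ring_scope.
Local Open Scope classical_set_scope.

Section Defs.
Variables (R : realType) (X : finType).

Definition ip (f g : X -> R) : R := (#|X|%:R)^-1 * \sum_(x : X) f x * g x.

Definition norm1 (f : X -> R) : R := (#|X|%:R)^-1 * \sum_(x : X) `|f x|.

Definition is_norm (N : (X -> R) -> R) : Prop :=
  [/\ forall f, 0 <= N f,
      forall f, N f = 0 -> f = (fun _ => 0),
      forall (a : R) f, N (fun x => a * f x) = `|a| * N f &
      forall f g, N (fun x => f x + g x) <= N f + N g].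

(* dual norm: ||phi||^* = max { <f,phi> : ||f|| <= 1 } (written as a sup;
   the max is attained by compactness) *)
Definition dual_norm (N : (X -> R) -> R) (phi : X -> R) : R :=
  sup [set ip f phi | f in [set f | N f <= 1]].

Definition is_algebra_norm (M : (X -> R) -> R) : Prop :=
  [/\ is_norm M,
      forall f g, M (fun x => f x * g x) <= M f * M g &
      M (fun _ => 1) = 1].
End Defs.

Section Poly.
Variable R : realType.

Definition RP (p : {poly R}) (x : R) : R :=
  \sum_(k < size p) `|p`_k| * x ^+ k.

Definition rho (C delta : R) (J : R -> R) : R :=
  2 * inf [set RP p C | p in
            [set p : {poly R} | forall x, - C <= x <= C -> `|p.[x] - J x| <= delta]].

Definition Jpos (x : R) : R := (x + `|x|) / 2.
End Poly.

(* Main.v *)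
Require Import Defs.
From HB Require Import structures.
From mathcomp Require Import all_boot all_order all_algebra.
From mathcomp Require Import boolp classical_sets reals.
From mathcomp Require Import topology normedtype derive.
From mathcomp Require Import ring lra.
Import Order.TTheory GRing.Theory Num.Theory.
Local Open Scope ring_scope.

Module Helpers.
Import numFieldNormedType.Exports.
Local Open Scope classical_set_scope.
Local Set Implicit Arguments.
Local Unset Strict Implicit.

Section Anal.
Variable R : realType.

Lemma coord_le_mxnorm n (v : 'rV[R]_n) i : `|v ord0 i| <= `|v|.
Proof.
have /mapP[j Hj ->] : `|v ord0 i| \in [seq `|v x.1 x.2| | x : 'I_1 * 'I_n].
  by apply/mapP; exists (ord0, i) => //=; rewrite mem_enum.
by rewrite [leRHS]/Num.norm /= mx_normrE; apply/bigmax_geP; right => /=; exists j.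
Qed.

Lemma loclip_cont n (F : 'rV[R]_n -> R) :
  (forall v, exists L, 0 <= L /\ forall w, `|v - w| <= 1 -> `|F v - F w| <= L * `|v - w|) ->
  continuous F.
Proof.
move=> HF v; have [L [L0 HL]] := HF v.
apply/(@cvgrPdist_lt _ _ _ (nbhs v) (nbhs_filter v)) => e e0.
apply/nbhs_ballP; exists (Num.min 1 (e / (L + 1))) => /=.
  by rewrite lt_min ltr01 divr_gt0 // ltr_wpDl.
move=> w; rewrite -ball_normE /= lt_min => /andP[w1 we].
apply: le_lt_trans (HL w (ltW w1)) _.
have L1 : 0 < L + 1 by rewrite ltr_wpDl.
rewrite ltr_pdivlMr // in we.
apply: le_lt_trans (_ : L * `|v - w| <= (L + 1) * `|v - w|) _.
  by rewrite ler_wpM2r // lerDl.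
by rewrite mulrC.
Qed.
End Anal.


Section Min.
Variables (R : realType) (X : finType).

Definition loclip (F : (X -> R) -> R) := forall h, exists L, forall h',
  (forall x, `|h x - h' x| <= 1) -> `|F h - F h'| <= L * \sum_x `|h x - h' x|.

Lemma exists_min (F G : (X -> R) -> R) (B : R) :
  (exists h, G h <= 0) -> (forall h, G h <= 0 -> forall x, `|h x| <= B) ->
  loclip F -> loclip G ->
  exists h0, G h0 <= 0 /\ forall h, G h <= 0 -> F h0 <= F h.
Proof.
move=> [h1 Gh1] HB HF HG.
pose ofV (v : 'rV[R]_#|X|) : X -> R := fun x => v ord0 (enum_rank x).
pose toV (h : X -> R) : 'rV[R]_#|X| := \row_i h (enum_val i).
have ofto h : ofV (toV h) = h.
  by apply/funext => x; rewrite /ofV /toV mxE enum_rankK.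
have lipV (H : (X -> R) -> R) : loclip H -> continuous (H \o ofV).
  move=> HH; apply: loclip_cont => v.
  have [L HL] := HH (ofV v).
  exists (`|L| * #|X|%:R); split; first by rewrite mulr_ge0.
  move=> w vw.
  have cw x : `|ofV v x - ofV w x| <= `|v - w|.
    by have := @coord_le_mxnorm R _ (v - w) (enum_rank x); rewrite !mxE.
  apply: le_trans (HL (ofV w) (fun x => le_trans (cw x) vw)) _.
  apply: le_trans (ler_norm _) _; rewrite normrM (ger0_norm (sumr_ge0 _ _)) //.
  rewrite -mulrA ler_wpM2l //.
  apply: le_trans (ler_sum _ (fun x _ => cw x)) _.
  by rewrite sumr_const mulr_natl.
pose A := [set v : 'rV[R]_#|X| | (G \o ofV) v <= 0].
have Acl : closed A.
  apply: (@preimage_closed _ _ (G \o ofV) [set x : R | x <= 0]); last exact: closed_le.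
  by move=> v _; apply: lipV.
have Aco : compact A.
  apply: (@subclosed_compact _ A [set v : 'rV[R]_#|X| | forall i, `[(- B), B]%classic (v ord0 i)] Acl).
    exact: (@rV_compact R _ (fun=> `[(- B), B]%classic) (fun=> @segment_compact R _ _)).
  move=> v /= Av i; move: (HB _ Av (enum_val i)).
  by rewrite /ofV enum_valK /= in_itv /= ler_norml.
have A0 : A !=set0 by exists (toV h1); rewrite /A /= ofto.
have Fc : {within A, continuous (F \o ofV)}.
  by apply: continuous_subspaceT; apply: lipV.
have [c cA cmin] := @EVT_min_rV R #|X| (F \o ofV) A A0 Aco Fc.
exists (ofV c); split; first by move: cA; rewrite inE.
move=> h Gh; rewrite -(ofto h); apply: (cmin (toV h)).
by rewrite inE /A /= ofto.
Qed.
End Min.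


Section Norm.
Variables (R : realType) (X : finType) (N : (X -> R) -> R).

Lemma N0 : is_norm N -> N (fun _ => 0) = 0.
Proof.
case=> _ _ Nh _; have /= := Nh 0 (fun _ => 0); rewrite mulr0 normr0 mul0r.
by [].
Qed.

Lemma Nopp : is_norm N -> forall f, N (fun x => - f x) = N f.
Proof.
move=> HN f; case: HN => _ _ Nh _; have /= := Nh (-1) f; rewrite normrN normr1 mul1r.
by under eq_fun do rewrite mulN1r.
Qed.

Lemma Nsym : is_norm N -> forall f g, N (fun x => f x - g x) = N (fun x => g x - f x).
Proof.
move=> HN f g; rewrite -(Nopp HN (fun x => g x - f x)) /=.
by congr N; apply/funext => x; rewrite opprB.
Qed.

Lemma Nsum : is_norm N -> forall (I : Type) (s : seq I) (F : I -> X -> R),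
  N (fun y => \sum_(i <- s) F i y) <= \sum_(i <- s) N (F i).
Proof.
move=> HN I s F; elim: s => [|i s IH].
  under eq_fun do rewrite big_nil. by rewrite big_nil N0.
under eq_fun do rewrite big_cons. rewrite big_cons.
case: HN => _ _ _ Nt; apply: le_trans (Nt _ _) _; exact: lerD.
Qed.

Definition ev (x : X) : X -> R := fun y => (y == x)%:R.

Lemma Nbound : is_norm N -> forall h, N h <= \sum_x `|h x| * N (ev x).
Proof.
move=> HN h.
have E : h = (fun y => \sum_(x <- enum X) h x * ev x y).
  apply/funext => y; rewrite big_enum /= (bigD1 y) //= big1 /ev ?eqxx ?mulr1 ?addr0 //.
  by move=> x /negbTE; rewrite eq_sym => ->; rewrite mulr0.
rewrite {1}E; apply: le_trans (Nsum HN (enum X) (fun x y => h x * ev x y)) _; rewrite big_enum /=.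
apply: ler_sum => x _; case: HN => _ _ Nh _; rewrite Nh /=.
by [].
Qed.

Lemma Nlip : is_norm N -> exists L, 0 <= L /\ forall h h',
  `|N h - N h'| <= L * \sum_x `|h x - h' x|.
Proof.
move=> HN; exists (\sum_x N (ev x)); split.
  by apply: sumr_ge0 => x _; case: HN.
move=> h h'.
have key : forall a b, N a - N b <= (\sum_x N (ev x)) * \sum_x `|a x - b x|.
  move=> a b; rewrite lerBlDr.
  case: HN (HN) => _ _ _ Nt HN.
  have -> : N a = N (fun x => (a x - b x) + b x).
    by congr N; apply/funext => x; rewrite subrK.
  apply: le_trans (Nt _ _) _; rewrite lerD2r.
  apply: le_trans (Nbound HN _) _.
  rewrite mulr_sumr; apply: ler_sum => x _.
  rewrite mulrC ler_wpM2r //.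
  rewrite (bigD1 x) //= lerDl sumr_ge0 // => y _; by case: HN.
rewrite ler_norml key andbT lerNl opprB.
apply: le_trans (key h' h) _; apply: ler_wpM2l; first by apply: sumr_ge0 => x _; case: HN.
by apply: ler_sum => x _; rewrite distrC.
Qed.
End Norm.


Section Sep.
Variables (R : realType) (X : finType) (N : (X -> R) -> R) (b : X -> R).

Definition inK (g : X -> R) := forall x, 0 <= g x <= b x.
Definition viol (g : X -> R) :=
  \sum_x ((`|g x| - g x) + (`|g x - b x| + g x - b x)).

Lemma viol_le0 g : viol g <= 0 -> inK g.
Proof.
move=> H.
have nrm (a : R) : a <= `|a| /\ - a <= `|a|.
  by split; [exact: ler_norm | rewrite -normrN; exact: ler_norm].
have t0 x : 0 <= (`|g x| - g x) + (`|g x - b x| + g x - b x).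
  have := nrm (g x); have := nrm (g x - b x); lra.
have S0 : viol g = 0.
  by apply/le_anti; rewrite H /=; apply: sumr_ge0 => x _; exact: t0.
have E := psumr_eq0P (fun x _ => t0 x) S0.
move=> x; have := E x isT.
have := nrm (g x); have := nrm (g x - b x).
move=> h1 h2 h3; apply/andP; split; lra.
Qed.

Lemma inK_viol g : inK g -> viol g <= 0.
Proof.
move=> Hg; rewrite le_eqVlt; apply/orP; left; apply/eqP.
apply: big1 => x _; have /andP[h1 h2] := Hg x.
rewrite ger0_norm // ler0_norm ?subr_le0 //; lra.
Qed.

Lemma loclip_viol : loclip viol.
Proof.
move=> h; exists 4 => h' _.
rewrite /viol -sumrB mulr_sumr; apply: le_trans (ler_norm_sum _ _ _) _.
apply: ler_sum => x _.
have := ler_dist_dist (h x) (h' x).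
have := ler_dist_dist (h x - b x) (h' x - b x).
have -> : h x - b x - (h' x - b x) = h x - h' x by lra.
set u := `|h x| - `|h' x|; set v := `|h x - b x| - `|h' x - b x|.
set w := h x - h' x.
move=> hv hu.
have E : `|h x| - h x + (`|h x - b x| + h x - b x) -
   (`|h' x| - h' x + (`|h' x - b x| + h' x - b x)) = u + v by rewrite /u /v; lra.
rewrite E; apply: le_trans (ler_normD _ _) _.
have : 0 <= `|w| := normr_ge0 _; lra.
Qed.


Lemma Nbound2 : is_norm N -> forall h, N h <= (\sum_x N (@ev R X x)) * \sum_x `|h x|.
Proof.
move=> HN h; apply: le_trans (Nbound HN h) _.
rewrite mulr_sumr; apply: ler_sum => x _.
rewrite mulrC ler_wpM2r //.
rewrite (bigD1 x) //= lerDl sumr_ge0 // => y _; by case: HN.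
Qed.

Lemma loclip_Nc : is_norm N -> forall c, loclip (fun g => N (fun x => c x - g x)).
Proof.
move=> HN c h; have [L [L0 HL]] := Nlip HN; exists L => h' _.
apply: le_trans (HL _ _) _; rewrite ler_wpM2l //; apply: ler_sum => x _.
have -> : c x - h x - (c x - h' x) = - (h x - h' x) by lra.
by rewrite normrN.
Qed.

Lemma attain : is_norm N -> (forall x, 0 <= b x) -> forall c,
  exists g0, inK g0 /\ forall g, inK g -> N (fun x => c x - g0 x) <= N (fun x => c x - g x).
Proof.
move=> HN b0 c.
have ne : exists h, viol h <= 0.
  by exists (fun _ => 0); apply: inK_viol => x; rewrite lexx b0.
have bd : forall h, viol h <= 0 -> forall x, `|h x| <= \sum_x b x.
  move=> h Hh x; have /andP[h1 h2] := viol_le0 Hh x.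
  rewrite ger0_norm //; apply: le_trans h2 _.
  by rewrite (bigD1 x) //= lerDl sumr_ge0.
have [g0 [Hg0 Hmin]] := exists_min ne bd (loclip_Nc HN c) loclip_viol.
by exists g0; split; [exact: viol_le0 | move=> g /inK_viol; exact: Hmin].
Qed.
End Sep.


Section E.
Variables (R : realType) (X : finType) (N : (X -> R) -> R) (b : X -> R).

Definition edist (c : X -> R) :=
  inf [set N (fun x => c x - g x) | g in inK b].

Lemma edist_le : is_norm N -> forall c g, inK b g -> edist c <= N (fun x => c x - g x).
Proof.
move=> HN c g Hg; apply: ge_inf; last by exists g.
by exists 0 => _ [g' _ <-]; case: HN.
Qed.

Lemma edist_attain : is_norm N -> (forall x, 0 <= b x) -> forall c,
  exists g, inK b g /\ N (fun x => c x - g x) = edist c.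
Proof.
move=> HN b0 c; have [g0 [Hg0 Hmin]] := attain HN b0 c.
exists g0; split => //; apply/le_anti; rewrite edist_le //=.
rewrite andbT /edist; apply: lb_le_inf; first by exists (N (fun x => c x - g0 x)), g0.
by move=> _ [g Hg <-]; exact: Hmin.
Qed.

Lemma edist_lip : is_norm N -> (forall x, 0 <= b x) -> forall c c',
  edist c <= edist c' + N (fun x => c x - c' x).
Proof.
move=> HN b0 c c'; have [g [Hg <-]] := edist_attain HN b0 c'.
apply: le_trans (edist_le HN c Hg) _.
case: HN (HN) => _ _ _ Nt HN.
have -> : (fun x => c x - g x) = (fun x => (c' x - g x) + (c x - c' x)).
  by apply/funext => x; lra.
exact: Nt.
Qed.

End E.


Section F.
Variables (R : realType) (X : finType) (N : (X -> R) -> R) (b : X -> R).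

Lemma separate : is_norm N -> (forall x, 0 <= b x) ->
  forall (f : X -> R) (eta c0 : R), 0 < eta -> 0 <= c0 ->
  (forall h x, `|h x| <= c0 * N h) ->
  (forall g, inK b g -> eta < N (fun x => f x - g x)) ->
  exists phi : X -> R, 0 < \sum_x phi x ^+ 2 /\
   forall g h, inK b g -> N h <= eta ->
   \sum_x (g x + h x) * phi x + \sum_x phi x ^+ 2 <= \sum_x f x * phi x.
Proof.
move=> HN b0 f eta c0 eta0 c00 Hc Hno.
have nrm (a : R) : a <= `|a| /\ - a <= `|a|.
  by split; [exact: ler_norm | rewrite -normrN; exact: ler_norm].
pose G c := edist N b c - eta.
pose Q (c : X -> R) := \sum_x (f x - c x) ^+ 2.
have ne : exists h, G h <= 0.
  exists (fun _ => 0); rewrite /G subr_le0.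
  have [g0 [Hg0 _]] := attain HN b0 (fun _ => 0).
  apply: le_trans (edist_le HN (fun _ => 0) (_ : inK b (fun _ => 0))) _.
    by move=> x; rewrite lexx b0.
  have -> : (fun x : X => (0 : R) - 0) = (fun _ => 0) by apply/funext => x; rewrite subr0.
  by rewrite N0 // ltW.
have bd : forall c, G c <= 0 -> forall x, `|c x| <= \sum_x b x + c0 * eta.
  move=> c; rewrite /G subr_le0 => Hc1 x.
  have [g [Hg Eg]] := edist_attain HN b0 c.
  have /andP[g1 g2] := Hg x.
  have h1 : `|c x - g x| <= c0 * eta.
    apply: le_trans (Hc (fun x => c x - g x) x) _.
    by rewrite ler_wpM2l // Eg.
  have h2 : b x <= \sum_x b x by rewrite (bigD1 x) //= lerDl sumr_ge0.
  have t : `|c x| <= `|c x - g x| + `|g x|.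
    by have := ler_normD (c x - g x) (g x); rewrite subrK.
  rewrite (ger0_norm g1) in t; lra.
have lipQ : loclip Q.
  move=> h; exists (\sum_x (2 * `|f x - h x|) + 1) => h' hh'.
  rewrite /Q -sumrB mulr_sumr; apply: le_trans (ler_norm_sum _ _ _) _.
  apply: ler_sum => x _.
  have -> : (f x - h x) ^+ 2 - (f x - h' x) ^+ 2 =
     (h' x - h x) * (2 * (f x - h x) + (h x - h' x)) by rewrite !expr2; lra.
  rewrite normrM distrC mulrC ler_wpM2r //.
  apply: le_trans (ler_normD _ _) _.
  rewrite normrM (ger0_norm (_ : 0 <= 2 :> R)) //.
  have : 2 * `|f x - h x| <= \sum_x (2 * `|f x - h x|).
    by rewrite (bigD1 x) //= lerDl sumr_ge0 // => y _; rewrite mulr_ge0.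
  have := hh' x; lra.
have lipG : loclip G.
  move=> h; exists (\sum_x N (@ev R X x)) => h' _.
  have e1 := edist_lip HN b0 h h'.
  have e2 := edist_lip HN b0 h' h.
  have n1 := Nbound2 HN (fun x => h x - h' x).
  have n2 := Nbound2 HN (fun x => h' x - h x).
  have E : \sum_x `|h' x - h x| = \sum_x `|h x - h' x|.
    by apply: eq_bigr => x _; rewrite distrC.
  rewrite E in n2; rewrite /G ler_norml; apply/andP; split; lra.
have [p [Gp pmin]] := exists_min ne bd lipQ lipG.
have fS : ~ G f <= 0.
  rewrite /G subr_le0 => Hf.
  have [g [Hg Eg]] := edist_attain HN b0 f.
  by have := Hno g Hg; rewrite Eg => /(le_lt_trans Hf); rewrite ltxx.
pose phi x := f x - p x.
exists phi.
have phipos : 0 < \sum_x phi x ^+ 2.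
  rewrite lt_def sumr_ge0 ?andbT // => [|x _]; last exact: sqr_ge0.
  apply/eqP => E; apply: fS.
  have : f = p.
    have E2 := psumr_eq0P (fun x _ => sqr_ge0 (phi x)) E.
    apply/funext => x; have := E2 x.
    by move=> /(_ isT) /eqP; rewrite sqrf_eq0 subr_eq0 => /eqP.
  by move=> ->.
split => //.
have var : forall c, G c <= 0 -> \sum_x phi x * (c x - p x) <= 0.
  move=> c Gc.
  set A := \sum_x phi x * (c x - p x).
  set D := \sum_x (c x - p x) ^+ 2.
  have D0 : 0 <= D by apply: sumr_ge0 => x _; exact: sqr_ge0.
  have key : forall t, 0 <= t <= 1 -> 2 * t * A <= t ^+ 2 * D.
    move=> t /andP[t0 t1].
    pose q x := p x + t * (c x - p x).
    have Gq : G q <= 0.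
      move: Gc Gp; rewrite /G !subr_le0 => Gc Gp.
      have [gc [Hgc Ec]] := edist_attain HN b0 c.
      have [gp [Hgp Ep]] := edist_attain HN b0 p.
      pose gq x := gp x + t * (gc x - gp x).
      have Hgq : inK b gq.
        move=> x; have /andP[a1 a2] := Hgc x; have /andP[a3 a4] := Hgp x.
        rewrite /gq; apply/andP; split; nra.
      apply: le_trans (edist_le HN q Hgq) _.
      case: HN (HN) => _ _ Nh Nt HN.
      have -> : (fun x => q x - gq x) = (fun x => (fun x => (1 - t) * (p x - gp x)) x +
                                                (fun x => t * (c x - gc x)) x).
        by apply/funext => x; rewrite /q /gq; lra.
      apply: le_trans (Nt _ _) _; rewrite !Nh Ec Ep.
      rewrite (ger0_norm t0) ger0_norm ?subr_ge0 //; nra.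
    have := pmin q Gq.
    rewrite /Q.
    have -> : \sum_x (f x - q x) ^+ 2 =
       \sum_x phi x ^+ 2 - 2 * t * A + t ^+ 2 * D.
      rewrite /A /D mulr_sumr mulr_sumr -sumrB -big_split /=.
      by apply: eq_bigr => x _; rewrite /q /phi !expr2; lra.
    have -> : \sum_x (f x - p x) ^+ 2 = \sum_x phi x ^+ 2 by [].
    lra.
  rewrite leNgt; apply/negP => A0.
  pose t := Num.min 1 (A / (D + 1)).
  have t0 : 0 < t by rewrite lt_min ltr01 divr_gt0 // ltr_wpDl.
  have t1 : t <= 1 by rewrite ge_min lexx.
  have t2 : t <= A / (D + 1) by rewrite ge_min lexx orbT.
  have := key t; rewrite (ltW t0) t1 => /(_ isT).
  have D1 : 0 < D + 1 by rewrite ltr_wpDl.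
  have : t * D <= A.
    apply: le_trans (_ : A / (D + 1) * D <= A).
      by rewrite ler_wpM2r.
    rewrite mulrAC ler_pdivrMr //; nra.
  move=> tD key2.
  have : 2 * t * A <= t * A.
    apply: le_trans key2 _; rewrite expr2 -mulrA ler_wpM2l //; exact: ltW.
  nra.
move=> g h Hg Hh.
have Gc : G (fun x => g x + h x) <= 0.
  rewrite /G subr_le0; apply: le_trans (edist_le HN _ Hg) _.
  have -> : (fun x => g x + h x - g x) = h by apply/funext => x; lra.
  by [].
have := var _ Gc.
have -> : \sum_x phi x * (g x + h x - p x) =
   \sum_x (g x + h x) * phi x - \sum_x p x * phi x.
  by rewrite -sumrB; apply: eq_bigr => x _; lra.
have -> : \sum_x f x * phi x = \sum_x p x * phi x + \sum_x phi x ^+ 2.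
  by rewrite -big_split; apply: eq_bigr => x _; rewrite /phi expr2 /= -mulrDl; congr (_ * _); lra.
lra.
Qed.
End F.


Section G.
Variables (R : realType) (X : finType) (N : (X -> R) -> R).
Let M := dual_norm N.

Lemma ip0 (f : X -> R) : ip f (fun _ => 0) = 0.
Proof. by rewrite /ip big1 ?mulr0 // => x _; rewrite mulr0. Qed.

Lemma ipZ (a : R) (f g : X -> R) : ip (fun x => a * f x) g = a * ip f g.
Proof.
rewrite /ip mulrCA; congr (_ * _); rewrite mulr_sumr.
by apply: eq_bigr => x _; rewrite mulrA.
Qed.

Lemma dual_has_sup : is_norm N -> is_norm M -> forall phi,
  has_sup [set ip f phi | f in [set f | N f <= 1]].
Proof.
move=> HN HM phi.
have ne : [set ip f phi | f in [set f | N f <= 1]] !=set0.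
  by exists (ip (fun _ => 0) phi), (fun _ => 0) => //=; rewrite N0.
split => //; apply/not_notP => nb.
have : M phi = 0 by rewrite /M /dual_norm sup_out // => -[].
case: HM => _ Md _ _ /Md E; apply: nb; exists 0 => _ [f _ <-].
by rewrite E ip0.
Qed.

Lemma dual_ineq : is_norm N -> is_norm M -> forall h phi, ip h phi <= N h * M phi.
Proof.
move=> HN HM h phi.
have [Nh0|Nh0] := eqVneq (N h) 0.
  case: HN (HN) => _ Nd _ _ HN; have h0 := Nd _ Nh0; rewrite Nh0 mul0r h0.
  rewrite /ip big1 ?mulr0 // => x _; by rewrite mul0r.
have Npos : 0 < N h by rewrite lt_def Nh0 /=; case: HN.
have H := @sup_upper_bound _ _ (dual_has_sup HN HM phi) (ip (fun x => (N h)^-1 * h x) phi).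
rewrite ipZ in H.
have N1 : N (fun x => (N h)^-1 * h x) <= 1.
  case: HN => _ _ Nh _; rewrite Nh ger0_norm; last by rewrite invr_ge0 ltW.
  by rewrite mulVf.
rewrite -ler_pdivrMl //. rewrite /M /dual_norm. move: H; rewrite /ubound /=; apply. exists (fun x => (N h)^-1 * h x); [exact: N1 | exact: ipZ].
Qed.

Lemma ip_ev (h : X -> R) x : ip h (@ev R X x) = (#|X|%:R)^-1 * h x.
Proof.
rewrite /ip (bigD1 x) //= big1 /ev ?eqxx ?mulr1 ?addr0 //.
by move=> y /negbTE ->; rewrite mulr0.
Qed.

Lemma ip_evl (h : X -> R) x : ip (@ev R X x) h = (#|X|%:R)^-1 * h x.
Proof.
rewrite /ip (bigD1 x) //= big1 /ev ?eqxx ?mul1r ?addr0 //.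
by move=> y /negbTE ->; rewrite mul0r.
Qed.

Lemma N_lower : is_norm N -> is_norm M -> (0 < #|X|)%N -> exists c0, 0 <= c0 /\
  forall h x, `|h x| <= c0 * N h.
Proof.
move=> HN HM n0; exists (#|X|%:R * \sum_y M (@ev R X y)); split.
  by rewrite mulr_ge0 // sumr_ge0 // => y _; case: HM.
move=> h x.
have np : 0 < #|X|%:R :> R by rewrite ltr0n.
have key : forall h', h' x <= #|X|%:R * M (@ev R X x) * N h'.
  move=> h'; have := dual_ineq HN HM h' (@ev R X x).
  rewrite ip_ev ler_pdivrMl // => H.
  by apply: le_trans H _; rewrite mulrA mulrAC.
have le1 : M (@ev R X x) <= \sum_y M (@ev R X y).
  by rewrite (bigD1 x) //= lerDl sumr_ge0 // => y _; case: HM.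
have Nm : N (fun y => - h y) = N h by apply: Nopp.
have k1 := key h; have k2 := key (fun y => - h y); rewrite Nm /= in k2.
have Nge : 0 <= N h by case: HN.
rewrite ler_norml; apply/andP; split.
  rewrite lerNl; apply: le_trans k2 _; rewrite ler_wpM2r // ler_wpM2l // ltW //.
apply: le_trans k1 _; rewrite ler_wpM2r // ler_wpM2l // ltW //.
Qed.

End G.


Lemma bernoulli (R : realType) (r : R) k : 1 <= r -> 1 + k%:R * (r - 1) <= r ^+ k.
Proof.
move=> r1; elim: k => [|k IH]; first by rewrite mul0r addr0 expr0.
rewrite exprS.
have h : 0 <= (r - 1) ^+ 2 * k%:R by rewrite mulr_ge0 ?sqr_ge0.
apply: le_trans (_ : r * (1 + k%:R * (r - 1)) <= _); last first.
  by rewrite ler_wpM2l // (le_trans _ r1).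
rewrite -natr1 expr2 in h *; nra.
Qed.

Lemma archi_ex (R : realType) (K : R) : exists j : nat, K < j%:R.
Proof.
exists (Num.bound `|K|); apply: le_lt_trans (ler_norm K) _.
by apply: archi_boundP.
Qed.

Section H.
Variables (R : realType) (X : finType) (N : (X -> R) -> R).
Let M := dual_norm N.

Lemma Mpow : is_algebra_norm M -> forall (psi : X -> R) k,
  M (fun x => psi x ^+ k) <= M psi ^+ k.
Proof.
case=> [[Mge _ _ _] Msub M1] psi; elim=> [|k IH].
  by under eq_fun do rewrite expr0; rewrite M1 expr0.
under eq_fun do rewrite exprS.
by apply: le_trans (Msub _ _) _; rewrite exprS ler_wpM2l.
Qed.

Lemma sup_le_M : is_norm N -> is_algebra_norm M -> forall (psi : X -> R) x,
  `|psi x| <= M psi.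
Proof.
move=> HN HA psi x; have HM : is_norm M by case: HA.
have Mge : 0 <= M psi by case: HM.
have Nge : 0 <= N (@ev R X x) by case: HN.
have np : 0 < #|X|%:R :> R by rewrite ltr0n; apply/card_gt0P; exists x.
set a := `|psi x|; set m := M psi; set K := #|X|%:R * N (@ev R X x).
have K0 : 0 <= K by rewrite mulr_ge0 // ltW.
have key : forall j, a ^+ (2 * j) <= K * m ^+ (2 * j).
  move=> j; have := dual_ineq HN HM (@ev R X x) (fun y => psi y ^+ (2 * j)).
  rewrite ip_evl ler_pdivrMl // => H.
  have e : psi x ^+ (2 * j) = a ^+ (2 * j).
    rewrite /a -normrX ger0_norm // exprn_even_ge0 //.
    by rewrite oddM.  
  rewrite -e; apply: le_trans H _; rewrite /K -mulrA.
  apply: ler_wpM2l; first exact: ltW.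
  by apply: ler_wpM2l => //; exact: Mpow.
rewrite leNgt; apply/negP => am.
have [m0|m0] := eqVneq m 0.
  have := key 1%N; rewrite m0 expr0n /= mulr0.
  have : 0 < a ^+ (2 * 1) by rewrite exprn_gt0 // (le_lt_trans Mge) // -/m.
  by move=> /lt_le_trans h /h; rewrite ltxx.
have mp : 0 < m by rewrite lt_def m0 Mge.
set r := a / m.
have r1 : 1 < r by rewrite /r ltr_pdivlMr // mul1r.
have rk : forall j, r ^+ (2 * j) <= K.
  move=> j; rewrite /r expr_div_n ler_pdivrMr ?exprn_gt0 //; exact: key.
have [j Hj] := archi_ex (K / (r - 1)).
have := rk j; have := bernoulli (2 * j) (ltW r1).
have r10 : 0 < r - 1 by rewrite subr_gt0.
rewrite ltr_pdivrMr // in Hj.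
rewrite natrM.
have : 0 <= j%:R :> R by [].
nra.
Qed.

Lemma Msum : is_norm M -> forall (I : Type) (s : seq I) (F : I -> X -> R),
  M (fun y => \sum_(i <- s) F i y) <= \sum_(i <- s) M (F i).
Proof. exact: Nsum. Qed.

Lemma Mpoly : is_algebra_norm M -> forall (p : {poly R}) (psi : X -> R) C,
  M psi <= C -> M (fun x => p.[psi x]) <= RP p C.
Proof.
move=> HA p psi C MC; have HM : is_norm M by case: HA.
have Mge : 0 <= M psi by case: HM.
under eq_fun do rewrite horner_coef.
apply: le_trans (Msum HM _ (fun i y => p`_(val i) * psi y ^+ val i)) _.
rewrite /RP; apply: ler_sum => i _.
case: HM (HM) => _ _ Mh _ HM; rewrite Mh ler_wpM2l //.
apply: le_trans (Mpow HA _ _) _.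
by apply: lerXn2r => //; rewrite nnegrE //; exact: le_trans Mge MC.
Qed.
End H.

End Helpers.
Import Helpers.


Theorem theorem4p4 (R : realType) (X : finType) (mu nu : X -> R)
  (Hmu0 : forall x, 0 <= mu x) (Hnu0 : forall x, 0 <= nu x)
  (Hmu1 : norm1 mu <= 1) (Hnu1 : norm1 nu <= 1)
  (eta delta : R) (Heta : 0 < eta) (Hdelta : 0 < delta) (Hdelta1 : delta < 1)
  (N : (X -> R) -> R) (HN : is_norm N) (HNd : is_algebra_norm (dual_norm N))
  (Hmunu : N (fun x => mu x - nu x)
           <= delta / (2 * rho eta^-1 (delta / 4) (@Jpos R))) :
  forall f : X -> R, (forall x, 0 <= f x <= mu x) ->
  exists g : X -> R, (forall x, 0 <= g x <= (1 - delta)^-1 * nu x) /\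
                     N (fun x => f x - g x) <= eta.
Proof.
move=> f Hf.
have c1 : 1 <= (1 - delta)^-1 by rewrite invf_ge1 ?subr_gt0 //; lra.
have triv : (forall x, mu x <= (1 - delta)^-1 * nu x) ->
  exists g : X -> R, (forall x, 0 <= g x <= (1 - delta)^-1 * nu x) /\
                     N (fun x => f x - g x) <= eta.
  move=> Hmn; exists f; split.
    move=> x; have /andP[h1 h2] := Hf x; rewrite h1 /=; exact: le_trans h2 (Hmn x).
  have -> : (fun x => f x - f x) = (fun _ => 0) by apply/funext => x; rewrite subrr.
  by rewrite N0 // ltW.
have [n0|npos] := posnP #|X|.
  by apply: triv => x; move: n0; rewrite (cardD1 x) inE.
set C := eta^-1.
set Pset := [set p : {poly R} | forall x, - C <= x <= C -> `|p.[x] - Jpos x| <= delta / 4]%classic.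
set I := inf [set RP p C | p in Pset]%classic.
have rhoE : rho eta^-1 (delta / 4) (@Jpos R) = 2 * I by [].
rewrite rhoE in Hmunu.
have [I0|Ipos] := lerP I 0.
  apply: triv => x.
  have : N (fun x => mu x - nu x) <= 0.
    apply: le_trans Hmunu _; rewrite pmulr_rle0 // invr_le0; lra.
  have Nge : 0 <= N (fun x => mu x - nu x) by case: HN.
  move=> H; have H0 : N (fun x => mu x - nu x) = 0 by apply/le_anti; rewrite H Nge.
  case: HN => _ Nd _ _; have /(congr1 (fun h => h x)) /= := Nd _ H0.
  move/eqP; rewrite subr_eq0 => /eqP ->.
  have := Hnu0 x; nra.
have C0 : 0 < C by rewrite invr_gt0.
have RP0 : forall p, 0 <= RP p C.
  by move=> p; rewrite /RP sumr_ge0 // => k _; rewrite mulr_ge0 // exprn_ge0 // ltW.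
have [p0 Pp0 RPp0] : exists2 p0, Pset p0 & RP p0 C < 2 * I.
  have hi : has_inf [set RP p C | p in Pset]%classic.
    split; last by exists 0 => _ [p _ <-]; exact: RP0.
    apply/not_notP => ne.
    have : I = 0 by rewrite /I inf_out // => -[].
    lra.
  have [_ [p Pp <-] Hp] := inf_adherent Ipos hi.
  by exists p => //; rewrite -/I; lra.
apply/not_notP => nog.
pose b x := (1 - delta)^-1 * nu x.
have b0 : forall x, 0 <= b x by move=> x; rewrite /b mulr_ge0 // (le_trans ler01 c1).
have Hno : forall g, inK b g -> eta < N (fun x => f x - g x).
  move=> g Hg; rewrite ltNge; apply/negP => H; apply: nog; exists g; split => //.
have HM : is_norm (dual_norm N) by case: HNd.
have [c0 [c00 Hc]] := N_lower HN HM npos.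
have [phi [gam Hsep]] := separate HN b0 Heta c00 Hc Hno.
set M := dual_norm N.
have Mge : forall h, 0 <= M h by case: HM.
have np : 0 < #|X|%:R :> R by rewrite ltr0n.
set n := #|X|%:R : R.
have mpos : 0 < M phi.
  rewrite lt_def Mge andbT; apply/eqP => m0.
  case: HM => _ Md _ _; have := Md _ m0 => phi0.
  move: gam; rewrite phi0 big1 ?ltxx // => x _; by rewrite expr0n.
set m := M phi.
have claimA : forall g, inK b g ->
    n * eta * m + \sum_x phi x ^+ 2 <= \sum_x f x * phi x - \sum_x g x * phi x.
  move=> g Hg.
  set U := (\sum_x f x * phi x - \sum_x g x * phi x - \sum_x phi x ^+ 2) / (n * eta).
  have mU : m <= U.
    apply: ge_sup; first by case: (dual_has_sup HN HM phi).
    move=> _ [h Hh <-].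
    have Nh : N (fun x => eta * h x) <= eta.
      case: HN => _ _ Nhm _; rewrite Nhm ger0_norm; last exact: ltW.
      by rewrite -{2}(mulr1 eta); apply: ler_wpM2l => //; exact: ltW.
    have := Hsep g _ Hg Nh.
    have -> : \sum_x (g x + eta * h x) * phi x =
       \sum_x g x * phi x + eta * \sum_x h x * phi x.
      rewrite mulr_sumr -big_split; apply: eq_bigr => x _ /=; lra.
    move=> H; rewrite /ip /U invfM mulrCA ler_pM2l ?invr_gt0 //.
    rewrite ler_pdivlMr //; lra.
  move: mU; rewrite /U ler_pdivlMr ?mulr_gt0 //; lra.
have em : 0 < eta * m by rewrite mulr_gt0.
pose psi x := (eta * m)^-1 * phi x.
have phiE : forall x, phi x = (eta * m) * psi x.
  by move=> x; rewrite /psi mulrA mulfV ?mul1r // gt_eqF.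
have Mpsi : M psi = C.
  case: HM => _ _ Mh _; rewrite /M /psi Mh -/M -/m ger0_norm ?invr_ge0 ?ltW //.
  by rewrite invfM -mulrA mulVf ?mulr1 // gt_eqF.
have psiC : forall x, - C <= psi x <= C.
  move=> x; rewrite -ler_norml -Mpsi; exact: sup_le_M.
pose gs x := if 0 < psi x then nu x else 0.
have gsK : inK b gs.
  move=> x; rewrite /gs /b; case: ifP => _; last by rewrite lexx mulr_ge0 // (le_trans ler01 c1).
  rewrite Hnu0 /=; have := Hnu0 x; nra.
have A1 := claimA gs gsK.
set S := \sum_x (f x - gs x) * psi x.
have SE : \sum_x f x * phi x - \sum_x gs x * phi x = (eta * m) * S.
  rewrite /S mulr_sumr -sumrB; apply: eq_bigr => x _; rewrite phiE; lra.
have Sgt : n < S.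
  have gam' : 0 < \sum_x phi x ^+ 2 := gam.
  rewrite SE in A1.
  have : n * (eta * m) < (eta * m) * S by lra.
  by rewrite mulrC ltr_pM2l.
pose Q x := p0.[psi x].
have pw : forall x, (f x - gs x) * psi x <=
    (mu x - nu x) * Q x + (mu x + nu x) * (delta / 4).
  move=> x; have := Pp0 _ (psiC x); rewrite ler_norml -/(Q x) => /andP[q1 q2].
  have /andP[f1 f2] := Hf x; have m0 := Hmu0 x; have n0 := Hnu0 x.
  rewrite /gs /Jpos in q1 q2 *; case: ifP => hp.
    rewrite gtr0_norm // in q1 q2.
    have : Jpos (psi x) = psi x by rewrite /Jpos gtr0_norm //; lra.
    nra.
  move/negbT: hp; rewrite -leNgt => hp.
  rewrite ler0_norm // in q1 q2; nra.
have S1 : S <= \sum_x (mu x - nu x) * Q x + (\sum_x mu x + \sum_x nu x) * (delta / 4).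
  rewrite /S mulrDl !mulr_suml -!big_split /=; apply: ler_sum => x _.
  by apply: le_trans (pw x) _; rewrite [(mu x + nu x) * _]mulrDl.
have S2 : \sum_x (mu x - nu x) * Q x <= n * (N (fun x => mu x - nu x) * M Q).
  have := dual_ineq HN HM (fun x => mu x - nu x) Q.
  by rewrite /ip ler_pdivrMl.
have MQ : M Q <= RP p0 C by apply: (Mpoly HNd); move: Mpsi; rewrite /M => ->.
have MQ0 : 0 <= M Q := Mge Q.
have Nmn0 : 0 <= N (fun x => mu x - nu x) by case: HN.
have epsE : delta / (2 * (2 * I)) * (2 * I) = delta / 2.
  have t0 : 2 * I != 0 by rewrite gt_eqF // mulr_gt0.
  by rewrite invfM -!mulrA mulVf // mulr1.
have S3 : N (fun x => mu x - nu x) * M Q <= delta / 2.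
  rewrite -epsE; apply: le_trans (_ : N (fun x => mu x - nu x) * RP p0 C <= _).
    by apply: ler_wpM2l.
  apply: le_trans (_ : delta / (2 * (2 * I)) * RP p0 C <= _).
    by apply: ler_wpM2r.
  apply: ler_wpM2l; last exact: ltW.
  by rewrite divr_ge0 ?ltW // mulr_gt0 // mulr_gt0.
have summu : \sum_x mu x <= n.
  move: Hmu1; rewrite /norm1 ler_pdivrMl // mulr1.
  by under eq_bigr do rewrite ger0_norm //.
have sumnu : \sum_x nu x <= n.
  move: Hnu1; rewrite /norm1 ler_pdivrMl // mulr1.
  by under eq_bigr do rewrite ger0_norm //.
have : n * (N (fun x => mu x - nu x) * M Q) <= n * (delta / 2).
  by apply: ler_wpM2l => //; exact: ltW.
nra.
Qed.
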